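(* Let $n\ge1$, $k\in\{1,\dots,n\}$, $b>0$, $\bm d\in\mathbb R^n$ with $d_i>0$ for all $i$, $\tilde{\bm a}\in\mathbb R^n$, and let $Y\subseteq\mathbb R^n$ be nonempty. Consider $$\xi=\min_{\bm y\in Y}\ \tilde{\bm a}^\top\bm y+\max_{(\bm x,\bm z)\in\mathbb R^n\times[0,1]^n}\Big\{\bm x^\top\bm y:\ \sum_{i=1}^n\frac{(d_ix_i)^2}{z_i}\le b,\ \sum_{i=1}^nz_i\le k\Big\}.$$ For $\bm y\in\mathbb R^n$, let $(1),\dots,(n)$ be a permutation of $\{1,\dots,n\}$ with $(y_{(1)}/d_{(1)})^2\ge\cdots\ge(y_{(n)}/d_{(n)})^2$ and let $s(\bm y)=\sum_{i=1}^k(y_{(i)}/d_{(i)})^2$. Then $$\xi=\min_{\bm y\in Y}\ \tilde{\bm a}^\top\bm y+\sqrt{b\,s(\bm y)},$$ and moreover $\xi$ equals the optimal value of $$\min_{\bm y,\bm t,\lambda,\mu}\ \tilde{\bm a}^\top\bm y+\lambda b+\mu k+\sum_{i=1}^nt_i\quad\text{s.t.}\quad (y_i/d_i)^2\le4(t_i+\mu)\lambda\ (i=1,\dots,n),\ \bm y\in Y,\ \bm t\in\mathbb R^n_+,\ \lambda\ge0,\ \mu\ge0$$ (with ''min'' understood as infimum where needed).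
   Context: Division convention: $a/b=0$ if $a=b=0$, and $a/b=+\infty$ if $b=0$ and $a\ne0$, so the constraint $\sum_i (d_ix_i)^2/z_i\le b$ forces $x_i=0$ whenever $z_i=0$. *)

(* Defs.v *)
From HB Require Import structures.
From mathcomp Require Import all_boot all_order all_algebra.
From mathcomp Require Import all_classical all_reals all_analysis.
Set Implicit Arguments. Unset Strict Implicit. Unset Printing Implicit Defensive.
Import Order.TTheory GRing.Theory Num.Theory.
Local Open Scope classical_set_scope.
Local Open Scope ring_scope.

(* Division convention of the paper, valued in extended reals:
   a/b = 0 if a = b = 0, a/b = +oo if b = 0 and a <> 0. *)
Definition ediv (R : realType) (a b : R) : \bar R :=
  if b == 0 then (if a == 0 then 0%E else +oo%E) else (a / b)%:E.

Definition dotv (R : realType) (n : nat) (u v : 'I_n -> R) : R :=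
  \sum_(i < n) u i * v i.

Definition inner_feas (R : realType) (n k : nat) (b : R) (d : 'I_n -> R)
    : set (('I_n -> R) * ('I_n -> R)) :=
  [set xz | (forall i, 0 <= xz.2 i <= 1) /\
            (\sum_(i < n) ediv ((d i * xz.1 i) ^+ 2) (xz.2 i) <= b%:E)%E /\
            \sum_(i < n) xz.2 i <= k%:R].

Definition inner_val (R : realType) (n k : nat) (b : R) (d y : 'I_n -> R) : \bar R :=
  ereal_sup [set (dotv xz.1 y)%:E | xz in inner_feas k b d].

Definition xi_val (R : realType) (n k : nat) (b : R) (d a : 'I_n -> R)
    (Y : set ('I_n -> R)) : \bar R :=
  ereal_inf [set ((dotv a y)%:E + inner_val k b d y)%E | y in Y].

Definition s_val (R : realType) (n k : nat) (d y : 'I_n -> R) : R :=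
  \sum_(w <- take k (sort (fun u v : R => v <= u)
                        [seq (y i / d i) ^+ 2 | i <- enum 'I_n])) w.

Definition sqrt_obj_val (R : realType) (n k : nat) (b : R) (d a : 'I_n -> R)
    (Y : set ('I_n -> R)) : \bar R :=
  ereal_inf [set (dotv a y + Num.sqrt (b * s_val k d y))%:E | y in Y].

Definition conic_val (R : realType) (n k : nat) (b : R) (d a : 'I_n -> R)
    (Y : set ('I_n -> R)) : \bar R :=
  ereal_inf [set (dotv a ytlm.1.1.1 + ytlm.1.2 * b + ytlm.2 * k%:R
                   + \sum_(i < n) ytlm.1.1.2 i)%:E
            | ytlm in [set ytlm : ('I_n -> R) * ('I_n -> R) * R * R |
                let: (y, t, lam, mu) := ytlm in
                Y y /\ (forall i, 0 <= t i) /\ 0 <= lam /\ 0 <= mu /\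
                (forall i, (y i / d i) ^+ 2 <= 4 * (t i + mu) * lam)]].

(* Main.v *)
Require Import Defs.
From HB Require Import structures.
From mathcomp Require Import all_boot all_order all_algebra.
From mathcomp Require Import all_classical all_reals all_analysis.
From mathcomp Require Import ring lra.
Import Order.TTheory GRing.Theory Num.Theory.
Local Open Scope classical_set_scope.
Local Open Scope ring_scope.

Lemma topk (R : realType) (n k : nat) (v : 'I_n -> R) : (k <= n)%N ->
  exists S : {set 'I_n}, #|S| = k /\
   \sum_(w <- take k (sort (fun u w : R => w <= u) [seq v i | i <- enum 'I_n])) w
     = \sum_(i in S) v i /\
   (forall i j, i \in S -> j \notin S -> v j <= v i).
Proof.
move=> kn.
set r := relpre v (fun u w : R => w <= u).
set l := sort r (enum 'I_n).
have ul : uniq l by rewrite sort_uniq enum_uniq.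
have sl : size l = n by rewrite size_sort size_enum_ord.
have ut : uniq (take k l) by apply: take_uniq.
exists [set i in take k l]; split; [|split].
- rewrite cardsE (card_uniqP ut).
  by rewrite size_take sl; case: ltnP => // h; apply/eqP; rewrite eqn_leq kn h.
- rewrite sort_map -map_take big_map big_uniq //.
  by apply: eq_bigl => i; rewrite inE.
- move=> i j; rewrite !inE => hi hj.
  have tr : transitive r by move=> x y z /= h1 h2; exact: le_trans h2 h1.
  have tot : total r by move=> x y /=; exact: le_total.
  have := sort_sorted tot (enum 'I_n).
  rewrite -/l (sorted_pairwise tr) -{1}(cat_take_drop k l) pairwise_cat.
  case/and3P => /allrelP h _ _.
  apply: (h i j hi).
  have : j \in l by rewrite mem_sort mem_enum.
  by rewrite -{1}(cat_take_drop k l) mem_cat (negbTE hj).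
Qed.

Lemma thresh (R : realType) (n : nat) (v : 'I_n -> R) (S : {set 'I_n}) :
  (forall i, 0 <= v i) -> (forall i j, i \in S -> j \notin S -> v j <= v i) ->
  exists m, 0 <= m /\ (forall j, j \notin S -> v j <= m) /\
            (forall i, i \in S -> m <= v i).
Proof.
move=> v0 hS.
exists (\big[Num.max/0]_(j | j \notin S) v j); split; [|split].
- by apply: (big_ind (fun x => 0 <= x)) => // x y hx hy; rewrite le_max hx.
- by move=> j hj; apply: le_bigmax_cond.
- move=> i hi; apply/bigmax_leP; split => // j hj; exact: hS.
Qed.

Lemma knap (R : realType) (n k : nat) (v z : 'I_n -> R) (S : {set 'I_n}) m :
  #|S| = k -> 0 <= m -> (forall j, j \notin S -> v j <= m) ->
  (forall i, i \in S -> m <= v i) -> (forall i, 0 <= z i <= 1) ->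
  \sum_i z i <= k%:R -> \sum_i z i * v i <= \sum_(i in S) v i.
Proof.
move=> cS m0 hout hin hz hk.
have e1 : \sum_i z i * v i = \sum_i z i * (v i - m) + m * \sum_i z i.
  by rewrite mulr_sumr -big_split; apply: eq_bigr => i _ /=; ring.
have e2 : \sum_(i in S) v i = \sum_i (if i \in S then v i - m else 0) + m * k%:R.
  rewrite -big_mkcond /= sumrB sumr_const cS mulr_natr; ring.
rewrite e1 e2; apply: lerD; last exact: ler_wpM2l.
apply: ler_sum => i _; have := hz i; case/andP => z0 z1.
case: ifP => hi.
- have := hin i hi; nra.
- have := hout i (negbT hi); nra.
Qed.

Lemma amgm (R : realType) (b s lam : R) : 0 < b -> 0 <= s -> 0 < lam ->
  Num.sqrt (b * s) <= lam * b + s / (4 * lam).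
Proof.
move=> b0 s0 l0.
set u := s / (4 * lam).
have l4 : 4 * lam != 0 by rewrite gt_eqF //; lra.
have hs : s = 4 * lam * u by rewrite /u mulrCA mulfV // mulr1.
have u0 : 0 <= u by rewrite /u divr_ge0 //; lra.
have h0 : 0 <= lam * b + u by nra.
rewrite -(ger0_norm h0) -sqrtr_sqr; apply: ler_wsqrtr; rewrite hs.
have := sqr_ge0 (lam * b - u); rewrite !expr2; nra.
Qed.

Lemma attain (R : realType) (b s : R) : 0 < b -> 0 < s ->
  let L := Num.sqrt (b * s) / (2 * b) in
  0 < L /\ L * b + s / (4 * L) = Num.sqrt (b * s).
Proof.
move=> b0 s0 L.
have q0 : 0 < Num.sqrt (b * s) by rewrite sqrtr_gt0; nra.
have q2 : Num.sqrt (b * s) ^+ 2 = b * s by rewrite sqr_sqrtr //; nra.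
split; first by rewrite /L divr_gt0 //; lra.
rewrite /L; set q := Num.sqrt (b * s) in q0 q2 *.
have bn : b != 0 by rewrite gt_eqF.
have qn : q != 0 by rewrite gt_eqF.
have -> : s = q ^+ 2 / b by rewrite q2 mulrC mulKf.
by field; rewrite bn qn.
Qed.

Lemma bound (R : realType) (b s X : R) : 0 < b -> 0 <= s ->
  (forall lam, 0 < lam -> X <= lam * b + s / (4 * lam)) ->
  X <= Num.sqrt (b * s).
Proof.
move=> b0 s0 h.
have [s00|sp] := eqVneq s 0.
- rewrite s00 mulr0 sqrtr0; rewrite leNgt; apply/negP => X0.
  have b2 : 0 < 2 * b by lra.
  have := h (X / (2 * b)) (divr_gt0 X0 b2).
  rewrite s00 mul0r addr0.
  have bn : b != 0 by rewrite gt_eqF.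
  have -> : X / (2 * b) * b = X / 2 by field; rewrite bn.
  lra.
- have sp' : 0 < s by rewrite lt_def sp s0.
  have [L0 LE] := @attain R b s b0 sp'.
  rewrite -LE; exact: h.
Qed.

Lemma term_ineq (R : realType) (lam z d x y : R) : 0 < lam -> 0 < z -> d != 0 ->
  x * y / lam - z * (y / d) ^+ 2 / (4 * lam ^+ 2) <= (d * x) ^+ 2 / z.
Proof.
move=> l0 z0 dn.
have ln : lam != 0 by rewrite gt_eqF.
have zn : z != 0 by rewrite gt_eqF.
rewrite -subr_ge0.
have -> : (d * x) ^+ 2 / z - (x * y / lam - z * (y / d) ^+ 2 / (4 * lam ^+ 2))
   = (d * x - z * (y / d) / (2 * lam)) ^+ 2 / z.
  by field; rewrite dn ln zn.
by rewrite divr_ge0 ?sqr_ge0 // ltW.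
Qed.

Lemma inf_eq (R : realType) (A B : set \bar R) : A `<=` B ->
  (forall x, B x -> exists2 y, A y & (y <= x)%E) -> ereal_inf A = ereal_inf B.
Proof.
move=> AB h; apply/eqP; rewrite eq_le; apply/andP; split; last exact: le_ereal_inf.
apply: le_ereal_inf_tmp => x Bx; have [y Ay yx] := h x Bx.
exact: le_trans (ereal_inf_lbound Ay) yx.
Qed.



Lemma sstruct (R : realType) (n k : nat) (d y : 'I_n -> R) : (k <= n)%N ->
  exists S : {set 'I_n}, exists m : R, #|S| = k /\
   s_val k d y = \sum_(i in S) (y i / d i) ^+ 2 /\ 0 <= m /\
   (forall j, j \notin S -> (y j / d j) ^+ 2 <= m) /\
   (forall i, i \in S -> m <= (y i / d i) ^+ 2).
Proof.
move=> kn.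
have [S [cS [sS hS]]] := @topk _ _ _ (fun i => (y i / d i) ^+ 2) kn.
have [m [m0 [h1 h2]]] := @thresh _ _ _ S (fun i => sqr_ge0 (y i / d i)) hS.
by exists S, m; rewrite /s_val sS.
Qed.

Lemma allzero (R : realType) (n k : nat) (v : 'I_n -> R) (S : {set 'I_n}) m :
  (1 <= k)%N -> #|S| = k -> (forall i, 0 <= v i) ->
  (forall j, j \notin S -> v j <= m) -> (forall i, i \in S -> m <= v i) ->
  \sum_(i in S) v i = 0 -> forall i, v i = 0.
Proof.
move=> k1 cS v0 hout hin s0.
have hS : forall i, i \in S -> v i = 0.
  by move=> i hi; apply: (psumr_eq0P (fun j _ => v0 j) s0).
have : (0 < #|S|)%N by rewrite cS.
case/card_gt0P => i0 hi0.
have m0 : m <= 0 by rewrite -(hS i0 hi0); exact: hin.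
move=> i; case: (boolP (i \in S)) => hi; first exact: hS.
by apply/eqP; rewrite eq_le v0 andbT; exact: le_trans (hout i hi) m0.
Qed.



Lemma inner_eq (R : realType) (n k : nat) (b : R) (d y : 'I_n -> R) :
  (1 <= k <= n)%N -> 0 < b -> (forall i, 0 < d i) ->
  inner_val k b d y = (Num.sqrt (b * s_val k d y))%:E.
Proof.
case/andP => k1 kn b0 d0.
have dn : forall i, d i != 0 by move=> i; rewrite gt_eqF.
have [S [m [cS [sS [m0 [hout hin]]]]]] := @sstruct R n k d y kn.
set s := s_val k d y in sS *.
have s0 : 0 <= s by rewrite sS sumr_ge0 // => i _; exact: sqr_ge0.
apply/eqP; rewrite eq_le; apply/andP; split.
- apply: ge_ereal_sup => _ [[x z] [hz [hb hk]] <-] /=.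
  move: hz hb hk => /= hz hb hk.
  rewrite lee_fin; apply: bound => // lam l0.
  pose r i := x i * y i / lam - z i * (y i / d i) ^+ 2 / (4 * lam ^+ 2).
  have hr : forall i, ((r i)%:E <= ediv ((d i * x i) ^+ 2) (z i))%E.
    move=> i; rewrite /ediv /r; have /andP [z0 z1] := hz i.
    case: eqP => [->|/eqP zn].
    + case: eqP => [/eqP|_]; last exact: leey.
      rewrite sqrf_eq0 mulf_eq0 (negbTE (dn i)) /= => /eqP ->.
      by rewrite lee_fin; lra.
    + by rewrite lee_fin term_ineq // lt_def zn z0.
  have hsum : (\sum_i r i <= b).
    rewrite -lee_fin -sumEFin; apply: le_trans hb; exact: lee_sum.
  have hq : \sum_i z i * (y i / d i) ^+ 2 <= s.
    by rewrite sS; apply: (@knap _ _ _ _ _ _ _ cS m0 hout hin hz hk).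
  move: hsum; rewrite /r sumrB -!mulr_suml.
  set D := \sum_i x i * y i; set Q := \sum_i z i * (y i / d i) ^+ 2.
  rewrite /dotv -/D => hsum.
  have ln : lam != 0 by rewrite gt_eqF.
  have e : D - (lam * b + Q / (4 * lam)) = lam * (D / lam - Q / (4 * lam ^+ 2) - b).
    by field; rewrite ln.
  have h1 : D <= lam * b + Q / (4 * lam).
    rewrite -subr_le0 e; apply: mulr_ge0_le0; [exact: ltW | by rewrite subr_le0].
  apply: le_trans h1 _; rewrite lerD2l; apply: ler_wpM2r => //.
  by rewrite invr_ge0; lra.
- apply: ereal_sup_ubound.
  pose al := Num.sqrt (b * s) / s.
  have als : al * s = Num.sqrt (b * s).
    have [->|sn] := eqVneq s 0; first by rewrite !mulr0 sqrtr0.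
    by rewrite /al mulfVK.
  have al2 : al ^+ 2 * s <= b.
    have [->|sn] := eqVneq s 0; first by rewrite mulr0 ltW.
    rewrite /al expr_div_n sqr_sqrtr; last by rewrite mulr_ge0 // ltW.
    suff -> : b * s / s ^+ 2 * s = b by [].
    by field; rewrite sn.
  exists ((fun i => if i \in S then al * y i / d i ^+ 2 else 0),
          (fun i => if i \in S then 1 else 0)); last first.
    rewrite /= /dotv -als sS mulr_sumr; congr (_ %:E); rewrite [RHS]big_mkcond /=.
    apply: eq_bigr => i _; case: ifP => _; last by rewrite mul0r.
    by field; rewrite dn.
  split; [|split].
  + by move=> i /=; case: ifP => _; rewrite ?lexx ?ler01.
  + apply: le_trans _ (_ : ((al ^+ 2 * s)%:E <= b%:E)%E); last by rewrite lee_fin.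
    rewrite sS mulr_sumr -sumEFin le_eqVlt; apply/orP; left; apply/eqP.
    rewrite [RHS]big_mkcond /=.
    apply: eq_bigr => i _ /=; rewrite /ediv; case: (boolP (i \in S)) => hi.
    * rewrite oner_eq0 divr1; congr (_ %:E); field; by rewrite dn.
    * by rewrite eqxx mulr0 expr0n /= eqxx.
  + rewrite /= -big_mkcond /= sumr_const cS.
    by [].
Qed.



Lemma conic_lb (R : realType) (n k : nat) (b : R) (d y t : 'I_n -> R) lam mu :
  (1 <= k <= n)%N -> 0 < b ->
  (forall i, 0 <= t i) -> 0 <= lam -> 0 <= mu ->
  (forall i, (y i / d i) ^+ 2 <= 4 * (t i + mu) * lam) ->
  Num.sqrt (b * s_val k d y) <= lam * b + mu * k%:R + \sum_i t i.
Proof.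
case/andP => k1 kn b0 t0 l0 mu0 hc.
have [S [m [cS [sS [m0 [hout hin]]]]]] := @sstruct R n k d y kn.
set s := s_val k d y in sS *.
have st : \sum_(i in S) t i <= \sum_i t i.
  rewrite [X in X <= _]big_mkcond /=; apply: ler_sum => i _; case: ifP => //.
have nn : 0 <= lam * b + mu * k%:R + \sum_i t i.
  by rewrite !addr_ge0 ?mulr_ge0 ?sumr_ge0 // ltW.
have [l00|lp] := eqVneq lam 0.
- have v0 : forall i, (y i / d i) ^+ 2 = 0.
    move=> i; apply/eqP; rewrite eq_le sqr_ge0 andbT.
    by have := hc i; rewrite l00 mulr0.
  have -> : s = 0 by rewrite sS big1.
  by rewrite mulr0 sqrtr0.
- have lp' : 0 < lam by rewrite lt_def lp l0.
  apply: le_trans (@amgm R b s lam b0 _ lp') _.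
    by rewrite sS sumr_ge0 // => i _; exact: sqr_ge0.
  rewrite -addrA lerD2l.
  have h1 : s / (4 * lam) <= \sum_(i in S) (t i + mu).
    rewrite sS mulr_suml; apply: ler_sum => i _.
    rewrite ler_pdivrMr; last lra.
    by rewrite mulrCA mulrA; exact: hc.
  apply: le_trans h1 _.
  rewrite big_split /= sumr_const cS addrC mulr_natr; exact: lerD.
Qed.



Lemma conic_attain (R : realType) (n k : nat) (b : R) (d y : 'I_n -> R) :
  (1 <= k <= n)%N -> 0 < b ->
  exists t : 'I_n -> R, exists lam : R, exists mu : R,
  [/\ (forall i, 0 <= t i), 0 <= lam, 0 <= mu,
      (forall i, (y i / d i) ^+ 2 <= 4 * (t i + mu) * lam) &
      lam * b + mu * k%:R + \sum_i t i = Num.sqrt (b * s_val k d y)].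
Proof.
case/andP => k1 kn b0.
have [S [m [cS [sS [m0 [hout hin]]]]]] := @sstruct R n k d y kn.
set s := s_val k d y in sS *.
have [s00|sn] := eqVneq s 0.
- have v0 := @allzero R n k _ S m k1 cS (fun i => sqr_ge0 (y i / d i)) hout hin
     (esym (etrans (esym s00) sS)).
  exists (fun _ => 0), 0, 0; split => //.
  + by move=> i; rewrite v0 !mulr0.
  + by rewrite s00 !mulr0 !mul0r big1 // sqrtr0 !addr0.
- have s0 : 0 < s.
    rewrite lt_def sn sS sumr_ge0 // => i _; exact: sqr_ge0.
  have [L0 LE] := @attain R b s b0 s0.
  set L := Num.sqrt (b * s) / (2 * b) in L0 LE.
  have Ln : 4 * L != 0 by rewrite gt_eqF //; lra.
  have Ln0 : L != 0 by rewrite gt_eqF.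
  exists (fun i => if i \in S then ((y i / d i) ^+ 2 - m) / (4 * L) else 0), L,
    (m / (4 * L)); split.
  + move=> i; case: ifP => hi //; rewrite divr_ge0 ?subr_ge0 ?hin //; lra.
  + exact: ltW.
  + rewrite divr_ge0 //; lra.
  + move=> i; case: ifP => hi.
    * suff -> : 4 * (((y i / d i) ^+ 2 - m) / (4 * L) + m / (4 * L)) * L =
                (y i / d i) ^+ 2 by [].
      by move: ((y i / d i) ^+ 2) => v; field.
    * suff -> : 4 * (0 + m / (4 * L)) * L = m by exact: hout (negbT hi).
      by field.
  + rewrite -LE -big_mkcond /= -mulr_suml sumrB sumr_const cS -sS.
    by rewrite -mulr_natr; field.
Qed.



Theorem proposition6 (R : realType) (n k : nat) (b : R) (d a : 'I_n -> R)
    (Y : set ('I_n -> R)) :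
  (1 <= n)%N -> (1 <= k <= n)%N -> 0 < b -> (forall i, 0 < d i) ->
  Y !=set0 ->
  xi_val k b d a Y = sqrt_obj_val k b d a Y /\
  xi_val k b d a Y = conic_val k b d a Y.
Proof.
move=> n1 hk b0 d0 _.
have E : xi_val k b d a Y = sqrt_obj_val k b d a Y.
  rewrite /xi_val /sqrt_obj_val; congr ereal_inf.
  apply/seteqP; split => _ [y Yy <-]; exists y => //;
    by rewrite inner_eq.
split => //; rewrite E /sqrt_obj_val /conic_val; apply: inf_eq.
- move=> _ [y Yy <-].
  have [t [lam [mu [t0 l0 m0 hc hv]]]] := @conic_attain R n k b d y hk b0.
  exists (y, t, lam, mu) => //=.
  by rewrite -hv !addrA.
- move=> _ [[[[y t] lam] mu] /= [Yy [t0 [l0 [m0 hc]]]] <-].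
  exists (dotv a y + Num.sqrt (b * s_val k d y))%:E; first by exists y.
  rewrite lee_fin -!addrA lerD2l !addrA.
  exact: conic_lb.
Qed.
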